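(* Let $G$ be a digraph and $G'$ a subgraph of $G$. Then $\mathrm{sstat}_{\mathtt{vsc}}(G')\le\mathrm{sstat}_{\mathtt{vsc}}(G)$, and $\mathrm{lifo}_{\mathbf{gv}}(G')\le\mathrm{lifo}_{\mathbf{gv}}(G)$ for every $\mathbf{gv}\in\{\mathtt{i},\mathtt{isc},\mathtt{v},\mathtt{vsc},\mathtt{mi},\mathtt{misc},\mathtt{mv},\mathtt{mvsc}\}$.
   Context: All digraphs are finite, simple, without self-loops and have at least one vertex (induced subgraphs appearing as game data may be empty). For a finite set $V$, $V^*$ is the set of finite words over $V$, $\epsilon$ the empty word; $X \preceq Y$ means $X$ is a prefix of $Y$; for $X=a_1\cdots a_n$, $|X|=n$ and $\mathrm{let}(X)=\{a_1,\dots,a_n\}$. $A\Delta B$ is symmetric difference. For $X\subseteq V(G)$, $G\setminus X$ is the subgraph induced by $V(G)\setminus X$. Induced subgraphs are identified with their vertex sets. An initial component of a digraph $H$ is a strongly connected component $C$ with no edge from $H\setminus C$ into $C$. A subgraph $H\subseteq G$ is successor-closed if there is no edge of $G$ from $H$ to $G\setminus H$. LIFO-search game on $G$. A position is a pair $(X,R)$ with $X\in V(G)^*$ and $R$ a (possibly empty) induced subgraph of $G\setminus\mathrm{let}(X)$. It is an $\mathtt{i}$-position if $R$ is successor-closed; an $\mathtt{isc}$-position if $R$ is a union of strongly connected components of $G\setminus\mathrm{let}(X)$; a $\mathtt{v}$-position if $R$ is successor-closed and has a unique initial component; a $\mathtt{vsc}$-position if $R$ is a strongly connected component of $G\setminus\mathrm{let}(X)$.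 For $\mathbf{gv}\in\{\mathtt{i},\mathtt{isc},\mathtt{v},\mathtt{vsc}\}$, a $\mathbf{gv}$-position $(X',R')$ is a $\mathbf{gv}$-successor of $(X,R)$ if ($X\preceq X'$ or $X'\preceq X$), $|\mathrm{let}(X)\Delta\mathrm{let}(X')|=1$, and: for $\mathbf{gv}\in\{\mathtt{i},\mathtt{v}\}$, every $v'\in R'$ is reachable by a directed path in $G\setminus(\mathrm{let}(X)\cap\mathrm{let}(X'))$ from some $v\in R$; for $\mathbf{gv}\in\{\mathtt{isc},\mathtt{vsc}\}$, every $v'\in R'$ lies in the same strongly connected component of $G\setminus(\mathrm{let}(X)\cap\mathrm{let}(X'))$ as some $v\in R$. For $\mathbf{gv}\in\{\mathtt{v},\mathtt{vsc}\}$, if $(\epsilon,G)$ is not a $\mathbf{gv}$-position it is nevertheless admitted as a special position whose $\mathbf{gv}$-successors are exactly the $\mathbf{gv}$-positions of the form $(\epsilon,R)$. A $\mathbf{gv}$-search from $(X_0,R_0)$ is a finite or infinite sequence of $\mathbf{gv}$-positions $(X_0,R_0),(X_1,R_1),\dots$ with each $(X_{i+1},R_{i+1})$ a $\mathbf{gv}$-successor of $(X_i,R_i)$; it is complete if it is infinite or $R_n=\emptyset$ for some $n$, and a complete search is winning for the searchers if $R_n=\emptyset$ for some $n$. A complete search from $(\epsilon,G)$ is monotone if $R_{i+1}\subseteq R_i$ for all $i$; searcher-stationary if $X_i\preceq X_{i+1}$ for all $i$ with $R_i\neq\emptyset$; uses at most $k$ searchers if $|X_i|\le k$ for all $i$.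 A (searcher) $\mathbf{gv}$-strategy is a function $\sigma$ from $\mathbf{gv}$-positions to $V(G)^*$ such that $\sigma(X,R)$ is the first component of some $\mathbf{gv}$-successor of $(X,R)$; a search is consistent with $\sigma$ if $X_{i+1}=\sigma(X_i,R_i)$ for all $i$. $\sigma$ is winning if every complete consistent search from $(\epsilon,G)$ is winning for the searchers; it is monotone / searcher-stationary / uses at most $k$ searchers if every complete consistent search from $(\epsilon,G)$ has that property. $\mathrm{lifo}_{\mathbf{gv}}(G)$ (resp. $\mathrm{lifo}_{\mathtt{m}\mathbf{gv}}(G)$) is the minimum $k$ such that there is a winning (resp. monotone winning) $\mathbf{gv}$-strategy on $G$ using at most $k$ searchers; $\mathrm{sstat}_{\mathtt{vsc}}(G)$ is the minimum $k$ such that there is a searcher-stationary winning $\mathtt{vsc}$-strategy on $G$ using at most $k$ searchers. *)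

(* Defs.v *)
From mathcomp Require Import all_boot.
From Stdlib Require Import ClassicalEpsilon.
Set Implicit Arguments. Unset Strict Implicit. Unset Printing Implicit Defensive.

Section LIFO.
Variable T : finType.

Record digraph := Digraph { dV : {set T}; dE : rel T }.

(* finite, simple (rel), no self-loops, at least one vertex *)
Definition wf_digraph (G : digraph) : Prop :=
  [/\ dV G != set0,
      (forall x y, dE G x y -> (x \in dV G) && (y \in dV G))
    & (forall x, ~~ dE G x x)].

Definition subgraph (G' G : digraph) : Prop :=
  dV G' \subset dV G /\ (forall x y, dE G' x y -> dE G x y).

Definition reach (G : digraph) (W : {set T}) (u v : T) : bool :=
  (u \in W) && connect [rel x y | [&& x \in W, y \in W & dE G x y]] u v.

Definition samescc G W u v : bool := reach G W u v && reach G W v u.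

Definition is_scc G (W C : {set T}) : Prop :=
  exists2 u, u \in W & C = [set v | samescc G W u v].

Definition succ_closed G (W R : {set T}) : Prop :=
  R \subset W /\ forall x y, x \in R -> y \in W -> dE G x y -> y \in R.

Definition union_scc G (W R : {set T}) : Prop :=
  R \subset W /\ forall u v, u \in R -> samescc G W u v -> v \in R.

Definition initial_comp G (R C : {set T}) : Prop :=
  is_scc G R C /\ forall x y, x \in R :\: C -> y \in C -> ~~ dE G x y.

Definition unique_initial G (R : {set T}) : Prop :=
  exists C, initial_comp G R C /\ forall C', initial_comp G R C' -> C' = C.

Inductive game_variant := Vi | Visc | Vv | Vvsc.

Definition letX (X : seq T) : {set T} := [set x in X].

Definition pos := (seq T * {set T})%type.

Definition is_gvpos (gv : game_variant) (G : digraph) (X : seq T) (R : {set T}) : Prop :=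
  let W := dV G :\: letX X in
  [/\ all (mem (dV G)) X, R \subset W &
  match gv with
  | Vi => succ_closed G W R
  | Visc => union_scc G W R
  | Vv => R = set0 \/ (succ_closed G W R /\ unique_initial G R)
  | Vvsc => R = set0 \/ is_scc G W R
  end].

Definition is_special gv G (X : seq T) (R : {set T}) : Prop :=
  (gv = Vv \/ gv = Vvsc) /\ X = [::] /\ R = dV G /\ ~ is_gvpos gv G [::] (dV G).

Definition is_pos gv G X R : Prop := is_gvpos gv G X R \/ is_special gv G X R.

Definition reg_succ gv G (p p' : pos) : Prop :=
  let: (X, R) := p in let: (X', R') := p' in
  let W0 := dV G :\: (letX X :&: letX X') in
  [/\ is_gvpos gv G X' R',
      prefix X X' || prefix X' X,
      #|(letX X :\: letX X') :|: (letX X' :\: letX X)| = 1 &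
      forall v', v' \in R' -> exists2 v, v \in R &
        match gv with
        | Vi | Vv => reach G W0 v v'
        | Visc | Vvsc => samescc G W0 v v'
        end].

Definition gv_succ gv G (p p' : pos) : Prop :=
  (is_special gv G p.1 p.2 -> p'.1 = [::] /\ is_gvpos gv G p'.1 p'.2) /\
  (~ is_special gv G p.1 p.2 -> reg_succ gv G p p').

Definition is_strategy gv G (sigma : seq T -> {set T} -> seq T) : Prop :=
  forall X R, is_pos gv G X R -> exists R', gv_succ gv G (X, R) (sigma X R, R').

(* a search is s restricted to indices i with inb o i; o = None: infinite *)
Definition inb (o : option nat) (i : nat) : bool :=
  if o is Some n then i < n else true.

Definition consistent_search gv G sigma (s : nat -> pos) (o : option nat) : Prop :=
  [/\ inb o 0, s 0 = ([::], dV G),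
      (forall i, inb o i -> is_pos gv G (s i).1 (s i).2) &
      (forall i, inb o i.+1 ->
         gv_succ gv G (s i) (s i.+1) /\ (s i.+1).1 = sigma (s i).1 (s i).2)].

Definition complete_search (s : nat -> pos) (o : option nat) : Prop :=
  o = None \/ exists2 i, inb o i & (s i).2 = set0.

Definition winning_search (s : nat -> pos) (o : option nat) : Prop :=
  exists2 i, inb o i & (s i).2 = set0.

Definition monotone_search (s : nat -> pos) (o : option nat) : Prop :=
  forall i, inb o i.+1 -> (s i.+1).2 \subset (s i).2.

Definition stationary_search (s : nat -> pos) (o : option nat) : Prop :=
  forall i, inb o i.+1 -> (s i).2 != set0 -> prefix (s i).1 (s i.+1).1.

Definition k_search (k : nat) (s : nat -> pos) (o : option nat) : Prop :=
  forall i, inb o i -> size (s i).1 <= k.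

Definition strat_has gv G sigma (P : (nat -> pos) -> option nat -> Prop) : Prop :=
  forall s o, consistent_search gv G sigma s o -> complete_search s o -> P s o.

Definition minnat (P : nat -> Prop) : nat :=
  epsilon (inhabits 0) (fun k => P k /\ forall j, P j -> k <= j).

(* m = true : monotone variant (mi, misc, mv, mvsc) *)
Definition lifo (m : bool) (gv : game_variant) (G : digraph) : nat :=
  minnat (fun k => exists sigma, [/\ is_strategy gv G sigma,
     strat_has gv G sigma winning_search,
     strat_has gv G sigma (k_search k) &
     (m -> strat_has gv G sigma monotone_search)]).

Definition sstat_vsc (G : digraph) : nat :=
  minnat (fun k => exists sigma, [/\ is_strategy Vvsc G sigma,
     strat_has Vvsc G sigma winning_search,
     strat_has Vvsc G sigma (k_search k) &
     strat_has Vvsc G sigma stationary_search]).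

End LIFO.

(* Main.v *)
Require Import Defs.
From mathcomp Require Import all_boot zify.
From Stdlib Require Import Classical ClassicalEpsilon.
Set Implicit Arguments. Unset Strict Implicit. Unset Printing Implicit Defensive.


Section Graph.
Variable T : finType.
Implicit Types (G : digraph T) (W R S : {set T}) (X : seq T).

Lemma connect_ind (e : rel T) (P : T -> Prop) x :
  P x -> (forall y z, P y -> e y z -> P z) -> forall y, connect e x y -> P y.
Proof.
move=> Px step y /connectP[p]; elim: p x Px => [|z p IH] x Px /=.
  by move=> _ ->.
move=> /andP[exz pz] ey; exact: (IH z (step _ _ Px exz) pz ey).
Qed.

Lemma reach_in G W u v : reach G W u v -> u \in W /\ v \in W.
Proof.
case/andP=> uW c; split => //.
by apply: (connect_ind (P := fun y => y \in W)) c => // y z _ /and3P[].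
Qed.

Lemma reach_refl G W u : u \in W -> reach G W u u.
Proof. by move=> uW; rewrite /reach uW connect0. Qed.

Lemma reach_trans G W u v w : reach G W u v -> reach G W v w -> reach G W u w.
Proof.
case/andP=> uW c1 /andP[_ c2]; rewrite /reach uW; exact: connect_trans c1 c2.
Qed.

Lemma reach_step G W u v w : reach G W u v -> w \in W -> dE G v w -> reach G W u w.
Proof.
move=> r wW e; apply: (reach_trans r); have [_ vW] := reach_in r.
by rewrite /reach vW connect1 //= vW wW.
Qed.

Lemma reach_edge G W v w : v \in W -> w \in W -> dE G v w -> reach G W v w.
Proof. by move=> vW wW e; apply: reach_step (reach_refl _ vW) wW e. Qed.

Lemma reach_sub G1 G2 W1 W2 u v :
  W1 \subset W2 -> (forall x y, dE G1 x y -> dE G2 x y) ->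
  reach G1 W1 u v -> reach G2 W2 u v.
Proof.
move=> sW sE /andP[uW c]; rewrite /reach (subsetP sW _ uW) /=.
apply: connect_sub c => x y /and3P[xW yW e]; apply: connect1.
by rewrite /= (subsetP sW _ xW) (subsetP sW _ yW) sE.
Qed.

Lemma reach_closed G W R u v : R \subset W ->
  (forall x y, x \in R -> y \in W -> dE G x y -> y \in R) ->
  u \in R -> reach G W u v -> reach G R u v.
Proof.
move=> sRW cl uR /andP[uW c].
apply: (connect_ind (P := fun y => reach G R u y)) c; first exact: reach_refl.
move=> y z ry /and3P[yW zW e]; have [_ yR] := reach_in ry.
exact: reach_step ry (cl _ _ yR zW e) e.
Qed.

Lemma reach_split G W b x y : reach G W x y ->
  reach G (W :\ b) x y \/ (reach G W x b /\ reach G W b y).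
Proof.
move=> r; have [xW _] := reach_in r; case/andP: r => _ c.
apply: (connect_ind (P := fun y => reach G (W :\ b) x y \/ (reach G W x b /\ reach G W b y))) c.
  have [exb|nb] := eqVneq x b; first by right; rewrite -exb; split; exact: reach_refl.
  by left; apply: reach_refl; rewrite !inE nb.
move=> z w [r|[r1 r2]] /and3P[zW wW e]; last by right; split => //; exact: reach_step r2 wW e.
have [ewb|nb] := eqVneq w b.
  right; rewrite -ewb; split; last exact: reach_refl.
  apply: reach_step _ wW e; apply: reach_sub r => //; exact: subsetDl.
by left; apply: reach_step r _ e; rewrite !inE nb.
Qed.

Lemma crossing (e : rel T) (A : pred T) x y : connect e x y -> ~~ A x -> A y ->
  exists u v, [/\ e u v, ~~ A u & A v].
Proof.
move=> c nAx Ay.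
have : ~~ A y \/ exists u v, [/\ e u v, ~~ A u & A v].
  apply: (connect_ind (P := fun z => ~~ A z \/ exists u v, [/\ e u v, ~~ A u & A v])) c;
    first by left.
  move=> z w [nz|ex] ezw; last by right.
  by case Aw: (A w); [right; exists z, w|left].
by case=> //; rewrite Ay.
Qed.

Lemma scc_refl G W u : u \in W -> samescc G W u u.
Proof. by move=> uW; rewrite /samescc reach_refl. Qed.
Lemma scc_sym G W u v : samescc G W u v = samescc G W v u.
Proof. by rewrite /samescc andbC. Qed.
Lemma scc_trans G W u v w : samescc G W u v -> samescc G W v w -> samescc G W u w.
Proof.
case/andP=> a b /andP[c d]; apply/andP; split; [exact: reach_trans a c|exact: reach_trans d b].
Qed.
Lemma scc_sub G1 G2 W1 W2 u v :
  W1 \subset W2 -> (forall x y, dE G1 x y -> dE G2 x y) ->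
  samescc G1 W1 u v -> samescc G2 W2 u v.
Proof. by move=> s1 s2 /andP[a b]; apply/andP; split; [exact: reach_sub a|exact: reach_sub b]. Qed.
Lemma scc_in G W u v : samescc G W u v -> u \in W /\ v \in W.
Proof. by case/andP=> /reach_in. Qed.

Lemma scc_split G W b x y : samescc G W x y ->
  samescc G (W :\ b) x y \/ samescc G W x b.
Proof.
case/andP=> r1 r2.
have sW : W :\ b \subset W by exact: subsetDl.
case: (reach_split b r1) => [a|[a1 a2]]; case: (reach_split b r2) => [c|[c1 c2]].
- by left; apply/andP.
- right; apply/andP; split; first exact: reach_trans (reach_sub sW (fun _ _ h => h) a) c1.
  exact: c2.
- by right; apply/andP; split => //; apply: reach_trans a2 r2.
- by right; apply/andP; split => //; apply: reach_trans a2 r2.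
Qed.

End Graph.


Section Init.
Variable T : finType.
Implicit Types (G : digraph T) (W R S : {set T}) (X : seq T).

Lemma ui_from_root G R u0 : u0 \in R -> (forall y, y \in R -> reach G R u0 y) ->
  unique_initial G R.
Proof.
move=> u0R hr; exists [set v | samescc G R u0 v]; split.
  split; first by exists u0.
  move=> x y /setDP[xR nx]; rewrite inE => /andP[r1 r2]; apply/negP => e.
  rewrite inE in nx.
  have [_ yR] := reach_in r1.
  move/negP: nx; apply; apply/andP; split; first exact: hr.
  exact: reach_trans (reach_edge xR yR e) r2.
move=> C' [[u uR ->] init].
have u0C : samescc G R u u0.
  apply/negPn/negP => nu0.
  have := hr _ uR; case/andP => _ c.
  have [a [b [/and3P[aR bR e] na nb]]] :=
    crossing (A := fun v => samescc G R u v) c nu0 (scc_refl _ uR).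
  simpl in na, nb.
  have h1 : a \in R :\: [set v | samescc G R u v] by rewrite !inE aR andbT.
  have h2 : b \in [set v | samescc G R u v] by rewrite inE.
  by move: (init a b h1 h2); rewrite e.
apply/setP => v; rewrite !inE; apply/idP/idP => h.
  by apply: scc_trans h; rewrite scc_sym.
exact: scc_trans u0C h.
Qed.

Lemma root_from_ui G R : unique_initial G R -> forall y, y \in R ->
  exists2 u0, u0 \in R & forall y, y \in R -> reach G R u0 y.
Proof.
move=> [C [[[c cR defC] initC] uniq]] _ _; exists c => // y yR.
pose anc x := [set z in R | reach G R z x].
pose P x := (x \in R) && reach G R x y.
have Py : P y by rewrite /P yR reach_refl.
case: (arg_minnP (fun x => #|anc x|) Py) => x /andP[xR rxy] xmin.
suff : [set v | samescc G R x v] = C.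
  move=> e; have : x \in C by rewrite -e inE scc_refl.
  rewrite defC inE => /andP[r _]; exact: reach_trans r rxy.
apply: uniq; split; first by exists x.
move=> z w /setDP[zR nz]; rewrite inE => /andP[r1 r2]; apply/negP => e.
rewrite inE in nz.
have [_ wR] := reach_in r1.
have rzx : reach G R z x := reach_trans (reach_edge zR wR e) r2.
have Pz : P z by rewrite /P zR (reach_trans rzx rxy).
have := xmin _ Pz; apply/negP; rewrite -ltnNge; apply: proper_card.
apply/properP; split.
  apply/subsetP => t; rewrite !inE => /andP[-> rt] /=; exact: reach_trans rt rzx.
exists x; first by rewrite inE xR reach_refl.
rewrite inE; apply/negP => /andP[_ rxz]; move/negP: nz; apply; apply/andP; split => //.
Qed.

End Init.


Section Lift.
Variable T : finType.
Implicit Types (G : digraph T) (W R S : {set T}) (X : seq T).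

Definition rtype gv := match gv with Vi | Vv => true | _ => false end.
Definition vrel gv G W u v := if rtype gv then reach G W u v else samescc G W u v.

Lemma rel_in gv G W u v : vrel gv G W u v -> u \in W /\ v \in W.
Proof. rewrite /vrel; case: ifP => _; [exact: reach_in|exact: scc_in]. Qed.
Lemma rel_refl gv G W u : u \in W -> vrel gv G W u u.
Proof. rewrite /vrel; case: ifP => _; [exact: reach_refl|exact: scc_refl]. Qed.
Lemma rel_trans gv G W u v w : vrel gv G W u v -> vrel gv G W v w -> vrel gv G W u w.
Proof. rewrite /vrel; case: ifP => _; [exact: reach_trans|exact: scc_trans]. Qed.
Lemma rel_sub gv G1 G2 W1 W2 u v :
  W1 \subset W2 -> (forall x y, dE G1 x y -> dE G2 x y) ->
  vrel gv G1 W1 u v -> vrel gv G2 W2 u v.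
Proof. rewrite /vrel; case: ifP => _; [exact: reach_sub|exact: scc_sub]. Qed.
Lemma rel_split gv G W b x y : vrel gv G W x y -> vrel gv G (W :\ b) x y \/ vrel gv G W x b.
Proof.
rewrite /vrel; case: ifP => _; last exact: scc_split.
by case/(reach_split b) => [|[]]; [left|right].
Qed.

Definition liftS gv G W S := [set y | [exists w in S, vrel gv G W w y]].

Lemma liftP gv G W S y : reflect (exists2 w, w \in S & vrel gv G W w y) (y \in liftS gv G W S).
Proof.
rewrite inE; apply: (iffP existsP) => [[w /andP[]]|[w a b]]; first by exists w.
by exists w; rewrite a.
Qed.

Lemma liftS_subW gv G W S : liftS gv G W S \subset W.
Proof. by apply/subsetP => y /liftP[w _ /rel_in[]]. Qed.

Lemma liftS_sup gv G W S : S \subset W -> S \subset liftS gv G W S.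
Proof.
by move=> sSW; apply/subsetP => y yS; apply/liftP; exists y => //; apply: rel_refl (subsetP sSW _ yS).
Qed.

Lemma liftS0 gv G W : liftS gv G W set0 = set0.
Proof. by apply/setP => y; rewrite in_set0; apply/negbTE/liftP => -[w]; rewrite inE. Qed.

Lemma liftS_succ gv G W W0 S R : W \subset W0 ->
  (forall w, w \in S -> exists2 v, v \in R & vrel gv G W0 v w) ->
  forall y, y \in liftS gv G W S -> exists2 v, v \in R & vrel gv G W0 v y.
Proof.
move=> sW h y /liftP[w wS r]; have [v vR r'] := h w wS; exists v => //.
exact: rel_trans r' (rel_sub sW (fun _ _ x => x) r).
Qed.

Definition Good gv G W S := match gv with
  | Vv => S = set0 \/ exists2 u0, u0 \in S & forall w, w \in S -> reach G W u0 w
  | Vvsc => S = set0 \/ exists2 u0, u0 \in S & forall w, w \in S -> samescc G W u0 w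
  | _ => True end.

Lemma liftS_closed gv G W S : rtype gv ->
  forall x y, x \in liftS gv G W S -> y \in W -> dE G x y -> y \in liftS gv G W S.
Proof.
move=> rt x y /liftP[w wS r] yW e; apply/liftP; exists w => //.
by move: r; rewrite /vrel rt => r; exact: reach_step r yW e.
Qed.

Lemma liftS_pos gv G X S :
  all (mem (dV G)) X -> S \subset dV G :\: letX X -> Good gv G (dV G :\: letX X) S ->
  is_gvpos gv G X (liftS gv G (dV G :\: letX X) S).
Proof.
set W := dV G :\: letX X => aX sSW gd; split => //; first exact: liftS_subW.
case: gv gd => gd.
- by split; [exact: liftS_subW|exact: liftS_closed].
- split; first exact: liftS_subW.
  by move=> u v /liftP[w wS r] r2; apply/liftP; exists w => //; exact: scc_trans r r2.
- case: gd => [->|[u0 u0S hu]]; first by left; rewrite liftS0.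
  right; split; first by split; [exact: liftS_subW|exact: liftS_closed].
  have u0W : u0 \in W := subsetP sSW _ u0S.
  apply: (@ui_from_root _ _ _ u0).
    by apply/liftP; exists u0 => //; exact: reach_refl.
  move=> y /liftP[w wS r].
  apply: reach_closed; [exact: liftS_subW|exact: liftS_closed|idtac|].
    by apply/liftP; exists u0 => //; exact: reach_refl.
  exact: reach_trans (hu w wS) r.
- case: gd => [->|[u0 u0S hu]]; first by left; rewrite liftS0.
  right; exists u0; first exact: subsetP sSW _ u0S.
  apply/setP => y; rewrite inE; apply/liftP/idP => [[w wS r]|r].
    exact: scc_trans (hu w wS) r.
  by exists u0.
Qed.

Lemma good_from_pos gv G G' X' W R : subgraph G' G ->
  dV G' :\: letX X' \subset W ->
  is_gvpos gv G' X' R -> Good gv G W R.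
Proof.
move=> [_ sE] sW [_ sR]; case: gv => //.
- case=> [->|[[_ _] ui]]; first by left.
  have [->|[y yR]] := set_0Vmem R; first by left.
  right; have [u0 u0R hu] := root_from_ui ui yR; exists u0 => // w wR.
  apply: reach_sub (hu w wR) => //; exact: subset_trans sR sW.
- case=> [->|[u uW eR]]; first by left.
  right; exists u; first by rewrite eR inE scc_refl.
  by move=> w; rewrite eR inE; apply: scc_sub.
Qed.

End Lift.


Section Seqs.
Variable T : finType.
Implicit Types (X s t : seq T) (V : {set T}).

Definition fo s := rev (undup (rev s)).
Definition proj V X := fo [seq x <- X | x \in V].

Lemma mem_fo s x : (x \in fo s) = (x \in s).
Proof. by rewrite mem_rev mem_undup mem_rev. Qed.
Lemma uniq_fo s : uniq (fo s).
Proof. by rewrite rev_uniq undup_uniq. Qed.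
Lemma size_fo s : size (fo s) <= size s.
Proof. by rewrite size_rev (leq_trans (size_undup _)) // size_rev. Qed.

Lemma mem_proj V X x : (x \in proj V X) = (x \in X) && (x \in V).
Proof. by rewrite mem_fo mem_filter andbC. Qed.
Lemma letX_proj V X : letX (proj V X) = letX X :&: V.
Proof. by apply/setP => x; rewrite !inE mem_proj. Qed.
Lemma size_proj V X : size (proj V X) <= size X.
Proof. by rewrite (leq_trans (size_fo _)) // size_filter count_size. Qed.
Lemma uniq_proj V X : uniq (proj V X).
Proof. exact: uniq_fo. Qed.

Lemma fo_cat s t : fo (s ++ t) = fo s ++ fo [seq x <- t | x \notin s].
Proof.
rewrite /fo rev_cat undup_cat rev_cat; congr (_ ++ _).
rewrite filter_undup filter_rev; congr (rev (undup (rev _))); apply: eq_filter => x.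
by rewrite mem_rev.
Qed.

Lemma uniq_sub1 (u : seq T) v : uniq u -> v \in u ->
  (forall w, w \in u -> w = v) -> u = [:: v].
Proof.
case: u => [|a [|b u]] //=.
  by rewrite inE => _ /eqP ->.
move=> /andP[nab _] _ h; move: nab; rewrite (h a) ?inE ?eqxx // (h b) ?inE ?eqxx ?orbT //.
Qed.

Lemma proj_cat V X t : #|letX (X ++ t) :\: letX X| <= 1 ->
  proj V (X ++ t) = proj V X \/
  exists v, [/\ proj V (X ++ t) = rcons (proj V X) v, v \in V & v \in letX (X ++ t) :\: letX X].
Proof.
move=> hc; rewrite /proj filter_cat fo_cat.
set u := fo [seq x <- [seq x <- t | _] | _].
have memu x : (x \in u) = [&& x \in t, x \in V & x \notin X].
  rewrite /u mem_fo !mem_filter; case: (x \in V) => //=; last by rewrite andbF.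
  by rewrite andbC.
case eu: u => [|v u']; first by left; rewrite cats0.
right; have vu : v \in u by rewrite eu inE eqxx.
have vD : v \in letX (X ++ t) :\: letX X.
  by move: vu; rewrite memu !inE mem_cat => /and3P[-> _ ->]; rewrite orbT.
exists v; split => //; last by move: vu; rewrite memu => /and3P[].
rewrite -cats1 -eu; congr (_ ++ _); apply: uniq_sub1 => //; first exact: uniq_fo.
move=> w wu; apply/eqP; apply: contraTT hc => nwv; rewrite -ltnNge.
apply: (@leq_trans #|[set v; w]|); first by rewrite cards2 eq_sym nwv.
apply/subset_leq_card/subsetP => x; rewrite !inE => /orP[]/eqP->//.
  by move: vD; rewrite !inE.
by move: wu; rewrite memu mem_cat => /and3P[-> _ ->]; rewrite orbT.
Qed.

End Seqs.


Section Game.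
Variable T : finType.
Implicit Types (G : digraph T) (W R S : {set T}) (X : seq T).

Definition resp gv G X R X2 R2 := gv_succ gv G (X, R) (X2, R2).

Lemma gvpos_nspecial gv G X R : is_gvpos gv G X R -> ~ is_special gv G X R.
Proof. by move=> p [_ [eX [eR np]]]; apply: np; rewrite -eX -eR. Qed.

Lemma gvpos_empty gv G X R : is_gvpos gv G X R -> is_gvpos gv G X set0.
Proof.
case=> aX _ _; split => //; first exact: sub0set.
case: gv => //; try by left.
- by split; [exact: sub0set| move=> x y; rewrite inE].
- by split; [exact: sub0set| move=> x y; rewrite inE].
Qed.

Lemma resp_empty gv G X R X2 R2 : resp gv G X R X2 R2 -> resp gv G X R X2 set0.
Proof.
case=> h1 h2; split.
  by move=> /h1 /= [e p]; split => //; exact: gvpos_empty p.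
move=> /h2 /= [p a b _]; split => //; first exact: gvpos_empty p.
by move=> v; rewrite inE.
Qed.

Lemma resp_reg gv G X R X2 R2 : is_gvpos gv G X R ->
  resp gv G X R X2 R2 -> reg_succ gv G (X, R) (X2, R2).
Proof. by move=> p [_ h]; apply: h; exact: gvpos_nspecial. Qed.

Lemma reg_from_empty gv G X X2 R2 : reg_succ gv G (X, set0) (X2, R2) -> R2 = set0.
Proof.
move=> [_ _ _ h]; apply/setP => v; rewrite inE; apply/negP => vR.
by have [w] := h v vR; rewrite inE.
Qed.

Lemma last_prefix X : X != [::] -> exists Y,
  prefix Y X /\ #|letX X :\: letX Y| = 1.
Proof.
elim/last_ind: X => // Y x IH _.
have sub : prefix Y (rcons Y x) by exact: prefix_rcons.
case xY: (x \in Y).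
  have nY : Y != [::] by case: Y xY IH {sub}.
  have [Z [pZ cZ]] := IH nY; exists Z; split; first exact: prefix_trans pZ sub.
  rewrite -cZ; apply: eq_card => z; rewrite !inE mem_rcons inE.
  by case: eqP => // ->; rewrite xY.
exists Y; split => //; rewrite -(cards1 x); apply: eq_card => z.
rewrite !inE mem_rcons inE; case: (z =P x) => [->|_]; by [rewrite xY | case: (z \in Y)].
Qed.

Lemma letX_prefix X Y : prefix Y X -> letX Y \subset letX X.
Proof.
by case/prefixP=> Z ->; apply/subsetP => z; rewrite !inE mem_cat => ->.
Qed.

Lemma diff_sub (A B : {set T}) : B \subset A -> (A :\: B) :|: (B :\: A) = A :\: B.
Proof.
move=> sBA; apply/setP => z; rewrite !inE.
by case zB: (z \in B); rewrite ?(subsetP sBA _ zB) //= ?orbF ?andbF ?andbT //; case: (z \in A).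
Qed.

Lemma diff_sub2 (A B : {set T}) : B \subset A -> (B :\: A) :|: (A :\: B) = A :\: B.
Proof. by move=> h; rewrite setUC diff_sub. Qed.

Lemma move_exists gv G X R : wf_digraph G -> is_pos gv G X R ->
  exists X2, resp gv G X R X2 set0 /\ size X2 <= maxn (size X) 1.
Proof.
move=> [nV _ _] pos.
have gp0 : forall X2, all (mem (dV G)) X2 -> is_gvpos gv G X2 set0.
  move=> X2 a; split => //; first exact: sub0set.
  case: gv {pos} => //; try by left.
  - by split; [exact: sub0set| move=> x y; rewrite inE].
  - by split; [exact: sub0set| move=> x y; rewrite inE].
have aX : all (mem (dV G)) X.
  by case: pos => [[]|[_ [-> _]]].
case: (classic (is_special gv G X R)) => sp.
  exists [::]; split => //; split; first by move=> _; split => //; exact: gp0.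
  by move=> /(_ sp).
have reg : forall X2, reg_succ gv G (X, R) (X2, set0) -> resp gv G X R X2 set0.
  by move=> X2 h; split => // /sp.
case eX: X => [|x X'].
  case: (set_0Vmem (dV G)) => [e|[v vV]]; first by move: nV; rewrite e eqxx.
  exists [:: v]; split => //; rewrite -eX; apply: reg; rewrite eX; split => //=.
  - by apply: gp0; rewrite /= vV.
  - rewrite -(cards1 v); apply: eq_card => z; rewrite !inE; by case: (z == v).
  - by move=> v'; rewrite inE.
have [Y [pY cY]] := last_prefix (X := x :: X') isT.
exists Y; split; last by rewrite (leq_trans (size_prefix pY)) // leq_maxl.
rewrite -eX; apply: reg; rewrite eX; split.
- apply: gp0; apply/allP => z zY; rewrite -eX in pY; apply: (allP aX).
  by case/prefixP: pY => W ->; rewrite mem_cat zY.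
- by rewrite pY orbT.
- by rewrite diff_sub // letX_prefix.
- by move=> v'; rewrite inE.
Qed.

End Game.


Section Win.
Variable T : finType.
Variables (gv : game_variant) (G : digraph T) (k : nat) (m st : bool).
Implicit Types (W R S : {set T}) (X : seq T).

Definition allowed X R X2 :=
  [/\ exists R2, resp gv G X R X2 R2, size X2 <= k,
      (m -> forall R2, resp gv G X R X2 R2 -> R2 \subset R) &
      (st -> R != set0 -> prefix X X2)].

Fixpoint win n X R : Prop :=
  if n is n'.+1 then
    size X <= k /\ (R = set0 \/ exists2 X2, allowed X R X2 &
                      forall R2, resp gv G X R X2 R2 -> win n' X2 R2)
  else False.

Lemma win_mono n X R : win n X R -> win n.+1 X R.
Proof.
elim: n X R => [//|n IH] X R /= [sk [->|[X2 a h]]]; split => //; first by left.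
by right; exists X2 => // R2 /h /IH.
Qed.

Lemma win_le n n' X R : n <= n' -> win n X R -> win n' X R.
Proof.
move=> le; rewrite -(subnK le); elim: (n' - n) => //= d IH /IH; exact: win_mono.
Qed.

Lemma ex_min (P : nat -> Prop) : (exists n, P n) -> exists n, P n /\ forall j, P j -> n <= j.
Proof.
case=> n; elim/ltn_ind: n => n IH Pn.
case: (classic (exists j, j < n /\ P j)) => [[j [lt Pj]]|nj]; first exact: IH lt Pj.
exists n; split => // j Pj; rewrite leqNgt; apply/negP => lt; apply: nj; by exists j.
Qed.

Definition spec X R X2 :=
  [/\ exists R2, resp gv G X R X2 R2,
      (R = set0 -> size X2 <= maxn (size X) 1) &
      (R != set0 -> forall n, win n.+1 X R ->
         allowed X R X2 /\ forall R2, resp gv G X R X2 R2 -> win n X2 R2)].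

Definition psigma X R := epsilon (inhabits [::]) (spec X R).

Lemma spec_ok X R : wf_digraph G -> is_pos gv G X R -> spec X R (psigma X R).
Proof.
move=> wf pos; apply: (epsilon_spec (inhabits [::]) (spec X R)).
have [X0 [r0 s0]] := move_exists wf pos.
have [eR|nR] := eqVneq R set0.
  exists X0; split; [by exists set0 | by move=> _; exact: s0 | by rewrite eR eqxx].
case: (classic (exists n, win n.+1 X R)) => [ex|nex].
  have [n0 [w0 mn]] := ex_min ex.
  case: w0 => _ [eR|[X2 a h]]; first by move: nR; rewrite eR eqxx.
  exists X2; split; first by case: a.
    by move=> eR; move: nR; rewrite eR eqxx.
  move=> _ n wn; split => // R2 /h; apply: win_le; exact: mn.
exists X0; split; first by exists set0.
  by move=> eR; move: nR; rewrite eR eqxx.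
by move=> _ n wn; exfalso; apply: nex; exists n.
Qed.

Definition GoodS sigma := [/\ is_strategy gv G sigma, strat_has gv G sigma (@winning_search T),
  strat_has gv G sigma (@k_search T k), (m -> strat_has gv G sigma (@monotone_search T)) &
  (st -> strat_has gv G sigma (@stationary_search T))].

Lemma inbS o i : inb o i.+1 -> inb o i.
Proof. by case: o => //= n; apply: ltnW. Qed.

Lemma posA N : wf_digraph G -> 0 < k -> win N.+1 [::] (dV G) -> GoodS psigma.
Proof.
move=> wf k0 w0.
have strat : is_strategy gv G psigma.
  by move=> X R pos; have [[R2 h] _ _] := spec_ok wf pos; exists R2.
have nV : dV G != set0 by case: wf.
have nxt : forall s o, consistent_search gv G psigma s o ->
   forall i n, inb o i.+1 -> win n.+1 (s i).1 (s i).2 ->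
     ((s i).2 = set0 -> (s i.+1).2 = set0 /\ size (s i.+1).1 <= k) /\
     ((s i).2 != set0 -> allowed (s i).1 (s i).2 (s i.+1).1 /\ win n (s i.+1).1 (s i.+1).2).
  move=> s o [i0 e0 ps cs] i n ii w; have [sk _] := w; have [sc e1] := cs i ii.
  have [_ h2 h3] := spec_ok wf (ps i (inbS ii)).
  have rs : resp gv G (s i).1 (s i).2 (s i.+1).1 (s i.+1).2.
    by rewrite /resp -!surjective_pairing; exact: sc.
  split.
    move=> eR; have nsp : ~ is_special gv G (s i).1 (s i).2.
      by case=> _ [_ [eV _]]; move: nV; rewrite -eV eR eqxx.
    case: rs => _ /(_ nsp); rewrite eR => /reg_from_empty ->.
    split => //; rewrite e1 (leq_trans (h2 eR)) // geq_max sk; exact: k0.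
  move=> nR; have [a hw] := h3 nR n w; rewrite e1; split => //.
  by apply: hw; rewrite -e1.
have key : forall s o, consistent_search gv G psigma s o -> forall i, inb o i ->
    exists n, win n.+1 (s i).1 (s i).2 /\ ((s i).2 != set0 -> n + i <= N).
  move=> s o cs; have [i0 e0 ps _] := cs; elim=> [_|i IH ii].
    by rewrite e0; exists N; rewrite addn0.
  have [n [w b]] := IH (inbS ii); have [h0 h1] := nxt s o cs i n ii w.
  have [eR|nR] := eqVneq (s i).2 set0.
    have [e1 sk] := h0 eR; exists 0; split; first by split => //; left.
    by rewrite e1 eqxx.
  have [_ w1] := h1 nR; clear h0 h1; case: n w b w1 => [//|n] w b w1; exists n; split => //.
  by move=> _; rewrite addnS -addSn; exact: b.
split => //.
- move=> s o cs [eo|[i ii e]]; last by exists i.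
  subst o; case: (classic (exists i, (s i).2 = set0)) => [[i e]|ne]; first by exists i.
  have [n [w b]] := key s None cs N.+1 isT.
  have : (s N.+1).2 != set0 by apply/eqP => e; apply: ne; exists N.+1.
  by move=> /b; rewrite addnS ltnNge leq_addl.
- by move=> s o cs _ i ii; have [n [[sk _] _]] := key s o cs i ii.
- move=> mm s o cs _ i ii; have [n [w _]] := key s o cs i (inbS ii).
  have [h0 h1] := nxt s o cs i n ii w.
  have [eR|nR] := eqVneq (s i).2 set0; first by rewrite (proj1 (h0 eR)) eR sub0set.
  have [[_ _ hm _] _] := h1 nR; apply: (hm mm).
  have [_ _ _ cs'] := cs; have [sc _] := cs' i ii.
  by rewrite /resp -!surjective_pairing.
- move=> sst s o cs _ i ii nR; have [n [w _]] := key s o cs i (inbS ii).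
  have [_ h1] := nxt s o cs i n ii w; have [[_ _ _ hs] _] := h1 nR; exact: hs.
Qed.

Lemma escape X R : (forall n, ~ win n X R) -> size X <= k -> forall X2, allowed X R X2 ->
  exists R2, resp gv G X R X2 R2 /\ forall n, ~ win n X2 R2.
Proof.
move=> nw sk X2 a; apply: NNPP => hn.
have all_w : forall R2, resp gv G X R X2 R2 -> exists n, win n X2 R2.
  move=> R2 r; apply: NNPP => h; apply: hn; exists R2; split => // n w; apply: h; by exists n.
have : exists N, forall R2 : {set T}, R2 \in enum {set T} -> resp gv G X R X2 R2 -> win N X2 R2.
  elim: (enum {set T}) => [|R0 l [N hN]]; first by exists 0.
  case: (classic (resp gv G X R X2 R0)) => r0.
    have [n0 w0] := all_w R0 r0; exists (maxn N n0) => R2; rewrite inE => /orP[/eqP->|l2] r2.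
      by apply: win_le w0; rewrite leq_maxr.
    by apply: win_le (hN R2 l2 r2); rewrite leq_maxl.
  by exists N => R2; rewrite inE => /orP[/eqP->|l2] r2 //; exact: hN.
case=> N hN; apply: (nw N.+1); split => //; right; exists X2 => // R2; apply: hN.
by rewrite mem_enum.
Qed.

End Win.


Section Exist.
Variable T : finType.
Implicit Types (G : digraph T) (W R S : {set T}) (X : seq T).

Lemma reg_rel gv G X R X2 R2 : reg_succ gv G (X, R) (X2, R2) ->
  [/\ is_gvpos gv G X2 R2, prefix X X2 || prefix X2 X,
      #|(letX X :\: letX X2) :|: (letX X2 :\: letX X)| = 1 &
      forall v', v' \in R2 -> exists2 v, v \in R & vrel gv G (dV G :\: (letX X :&: letX X2)) v v'].
Proof. by case: gv. Qed.

Lemma mk_reg gv G X R X2 R2 : is_gvpos gv G X2 R2 -> prefix X X2 || prefix X2 X ->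
  #|(letX X :\: letX X2) :|: (letX X2 :\: letX X)| = 1 ->
  (forall v', v' \in R2 -> exists2 v, v \in R & vrel gv G (dV G :\: (letX X :&: letX X2)) v v') ->
  reg_succ gv G (X, R) (X2, R2).
Proof. by case: gv. Qed.

Lemma closed_rel gv G X R u w : is_gvpos gv G X R -> u \in R ->
  vrel gv G (dV G :\: letX X) u w -> w \in R.
Proof.
case=> _ sR; rewrite /vrel; case: gv => /=.
- by move=> [s cl] uR r; have [_ ] := reach_in (reach_closed s cl uR r).
- by move=> [s cl] uR r; exact: cl r.
- case=> [-> | [[s cl] _]]; first by rewrite inE.
  by move=> uR r; have [_ ] := reach_in (reach_closed s cl uR r).
- case=> [-> | [c cW ->]]; first by rewrite inE.
  by rewrite !inE => cu uw; exact: scc_trans cu uw.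
Qed.

Lemma all_prefix (V : {set T}) X Y : prefix Y X -> all (mem V) X -> all (mem V) Y.
Proof. by case/prefixP=> Z ->; rewrite all_cat => /andP[]. Qed.

Lemma card_letX X : #|letX X| <= size X.
Proof. by rewrite (leq_trans _ (card_size X)) // cardsE. Qed.

Lemma card_letX_uniq X : uniq X -> #|letX X| = size X.
Proof. by move=> u; rewrite cardsE; apply/card_uniqP. Qed.

Lemma gv_exists gv G m st : wf_digraph G ->
  exists n, win gv G #|dV G| m st n [::] (dV G).
Proof.
move=> wf; have nV : dV G != set0 by case: wf.
have reg : forall d X R, #|dV G :\: letX X| <= d -> uniq X -> is_gvpos gv G X R ->
    win gv G #|dV G| m st d.+1 X R.
  have skp : forall X R, uniq X -> is_gvpos gv G X R -> size X <= #|dV G|.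
    move=> X R uX [aX _ _]; rewrite -card_letX_uniq //; apply: subset_leq_card; apply/subsetP => z.
    rewrite inE => zX; exact: (allP aX).
  elim=> [|d IH] X R cd uX p; have [aX sR _] := p; have sk := skp X R uX p.
  - split => //; left; apply/setP => z; rewrite inE; apply/negP => zR.
    move: cd; rewrite leqn0 cards_eq0 => /eqP e.
    by have := subsetP sR _ zR; rewrite e inE.
  have [->|[v vR]] := set_0Vmem R; first by split => //; left.
  have vW := subsetP sR _ vR; move: (vW); rewrite inE => /andP[vX vV].
  have nsp := gvpos_nspecial p.
  set X2 := rcons X v.
  have aX2 : all (mem (dV G)) X2 by rewrite all_rcons aX andbT; exact: vV.
  have uX2 : uniq X2 by rewrite rcons_uniq uX andbT; move: vX; rewrite inE.
  have lX2 : letX X2 = v |: letX X by apply/setP => z; rewrite !inE mem_rcons inE.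
  have dX : #|(letX X :\: letX X2) :|: (letX X2 :\: letX X)| = 1.
    rewrite diff_sub2; last by rewrite lX2 subsetU1.
    rewrite -(cards1 v); apply: eq_card => z; rewrite lX2 !inE.
    case: (z =P v) => [->|] /=; [by move: vX; rewrite inE => /negbTE ->|by case: (z \in X)].
  have W0 : dV G :\: (letX X :&: letX X2) = dV G :\: letX X.
    by rewrite lX2; congr (_ :\: _); apply/setIidPl; exact: subsetU1.
  have rresp : forall R2, resp gv G X R X2 R2 -> reg_succ gv G (X, R) (X2, R2).
    by move=> R2 [_ h]; exact: h nsp.
  have p20 : is_gvpos gv G X2 set0.
    split => //; first exact: sub0set.
    case: gv {p nsp rresp sR IH skp} => //; try by left.
    * by split; [exact: sub0set|move=> x y; rewrite inE].
    * by split; [exact: sub0set|move=> x y; rewrite inE].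
  split => //; right; exists X2.
    split.
    - exists set0; split; first by move=> /nsp.
      move=> _; apply: mk_reg.
      + exact: p20.
      + by rewrite prefix_rcons.
      + exact: dX.
      + by move=> v'; rewrite inE.
    - exact: skp X2 set0 uX2 p20.
    - move=> _ R2 /rresp /reg_rel [_ _ _ h]; apply/subsetP => w /h [u uR].
      rewrite W0; exact: closed_rel p uR.
    - by move=> _ _; rewrite prefix_rcons.
  move=> R2 /rresp /reg_rel [p2 _ _ _]; apply: IH => //.
  rewrite -ltnS (leq_trans _ cd) // proper_card //; apply/properP; split.
    by rewrite lX2; apply: setDS; exact: subsetU1.
  by exists v => //; rewrite lX2 !inE eqxx.
have cd0 : #|dV G :\: letX [::]| <= #|dV G| by apply: subset_leq_card; exact: subsetDl.
case: (classic (is_gvpos gv G [::] (dV G))) => p0.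
  by exists #|dV G|.+1; exact: reg.
have sp : is_special gv G [::] (dV G).
  have e0 : dV G :\: letX [::] = dV G by apply/setP => z; rewrite !inE.
  suff hA : gv = Vv \/ gv = Vvsc by do 3!(split => //).
  case: gv p0 {reg} => p0; [exfalso|exfalso|by left|by right].
  - by apply: p0; split => //; rewrite e0 //; split => // x y _ ->.
  - by apply: p0; split => //; rewrite e0 //; split => // u v _ /scc_in [_ ->].
have p00 : is_gvpos gv G [::] set0.
  split => //; first exact: sub0set.
  case: gv {reg p0 sp} => //; try by left.
  * by split; [exact: sub0set|move=> x y; rewrite inE].
  * by split; [exact: sub0set|move=> x y; rewrite inE].
exists #|dV G|.+2; split => //; right; exists [::].
  split => //.
  - by exists set0; split => // /(_ sp).
  - move=> _ R2 [/(_ sp) [_ [_ sR2 _]] _]; apply: subset_trans sR2 _; exact: subsetDl.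
move=> R2 [/(_ sp) [_ p2] _]; exact: reg.
Qed.

End Exist.


Section Transfer.
Variable T : finType.
Variables (gv : game_variant) (G G' : digraph T) (k : nat) (m st : bool).
Variable sigma : seq T -> {set T} -> seq T.
Hypotheses (wfG : wf_digraph G) (wfG' : wf_digraph G') (sub : subgraph G' G).
Hypothesis good : GoodS gv G k m st sigma.

Local Notation V := (dV G).
Local Notation V' := (dV G').
Local Notation pr := (proj V').
Local Notation winG' := (win gv G' k m st).

Lemma sVV : V' \subset V. Proof. by case: sub. Qed.
Lemma sE : forall x y, dE G' x y -> dE G x y. Proof. by case: sub. Qed.

Lemma Wsub (X : seq T) : V' :\: letX (pr X) \subset V :\: letX X.
Proof.
apply/subsetP => z; rewrite letX_proj !inE => /andP[h zV'].
rewrite (subsetP sVV _ zV') andbT; apply: contra h => zX; by rewrite zX.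
Qed.

Lemma W0sub (X X2 : seq T) : V' :\: (letX (pr X) :&: letX (pr X2)) \subset V :\: (letX X :&: letX X2).
Proof.
apply/subsetP => z; rewrite !letX_proj !inE => /andP[h zV'].
rewrite (subsetP sVV _ zV') andbT; apply: contra h => /andP[a b]; by rewrite a b zV'.
Qed.

Lemma good1 (W : {set T}) b : b \in W -> Good gv G W [set b].
Proof.
move=> bW; case: gv => //=; right; exists b; rewrite ?inE // => w; rewrite inE => /eqP->.
  exact: reach_refl. exact: scc_refl.
Qed.

Lemma nonempty_nw (X : seq T) (R : {set T}) : (forall n, ~ winG' n X R) -> size X <= k -> R != set0.
Proof. by move=> nw sk; apply/eqP => e; apply: (nw 1); split => //; left. Qed.

Lemma both_prefix (X X2 : seq T) : prefix X X2 -> prefix X2 X -> X = X2.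
Proof.
move=> p1 p2; have e : size X = size X2 by apply/eqP; rewrite eqn_leq !size_prefix.
by move: p1; rewrite prefixE e take_size => /eqP.
Qed.

Variant shape (X X2 : seq T) : Prop :=
  | ShZ of pr X2 = pr X
  | ShA v of prefix X X2 & pr X2 = rcons (pr X) v & v \in V' & v \in letX X2 :\: letX X
  | ShB b of prefix X2 X & ~~ prefix X X2 & pr X = rcons (pr X2) b & b \in V' &
        b \in letX X :\: letX X2.

Lemma shapeP (X X2 : seq T) : prefix X X2 || prefix X2 X ->
  #|(letX X :\: letX X2) :|: (letX X2 :\: letX X)| = 1 -> shape X X2.
Proof.
case/orP => p c.
  have s := letX_prefix p; rewrite diff_sub2 // in c.
  case/prefixP: (p) c => t eX2 c; rewrite eX2 in c *.
  case: (proj_cat V' (X := X) (t := t)); first by rewrite c.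
    by move=> e; apply: ShZ.
  by case=> v [e vV vD]; apply: (ShA (prefix_prefix _ _) e vV vD).
have s := letX_prefix p; rewrite diff_sub // in c.
have np : ~~ prefix X X2.
  apply/negP => p2; move: c; rewrite (both_prefix p2 p) setDv cards0.
  by [].
case/prefixP: (p) c => t eX c; rewrite eX in c np *.
case: (proj_cat V' (X := X2) (t := t)); first by rewrite c.
  by move=> e; apply: ShZ.
by case=> b [e bV bD]; apply: (ShB (prefix_prefix _ _) np e bV bD).
Qed.


Lemma gvpos0 gv0 (H : digraph T) (X : seq T) : all (mem (dV H)) X -> is_gvpos gv0 H X set0.
Proof.
move=> a; split => //; first exact: sub0set.
case: gv0 => //; try by left.
- by split; [exact: sub0set| move=> x y; rewrite inE].
- by split; [exact: sub0set| move=> x y; rewrite inE].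
Qed.

Lemma letX_rcons (Y : seq T) v : letX (rcons Y v) = v |: letX Y.
Proof. by apply/setP => z; rewrite !inE mem_rcons inE. Qed.

Lemma card_rcons1 (Y : seq T) v : v \notin Y ->
  #|(letX Y :\: letX (rcons Y v)) :|: (letX (rcons Y v) :\: letX Y)| = 1.
Proof.
move=> vY; rewrite diff_sub2; last by rewrite letX_rcons subsetU1.
rewrite -(cards1 v); apply: eq_card => z; rewrite letX_rcons !inE.
by case: (z =P v) => [->|] /=; [rewrite (negbTE vY)|case: (z \in Y)].
Qed.

Lemma card_rcons2 (Y : seq T) v : v \notin Y ->
  #|(letX (rcons Y v) :\: letX Y) :|: (letX Y :\: letX (rcons Y v))| = 1.
Proof. by move=> vY; rewrite setUC card_rcons1. Qed.

Lemma inter_rcons (Y : seq T) v : letX Y :&: letX (rcons Y v) = letX Y.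
Proof. by apply/setIidPl; rewrite letX_rcons subsetU1. Qed.

Lemma all_proj (X : seq T) : all (mem V') (pr X).
Proof. by apply/allP => z; rewrite mem_proj => /andP[]. Qed.

Definition Inv (X : seq T) (R R' : {set T}) := [/\ is_gvpos gv G X R, is_gvpos gv G' (pr X) R',
  R' \subset R, (forall n, ~ winG' n (pr X) R') & size X <= k].

Definition escR (X : seq T) (R' : {set T}) (X2 : seq T) := epsilon (inhabits set0)
  (fun R2 => resp gv G' (pr X) R' (pr X2) R2 /\ forall n, ~ winG' n (pr X2) R2).
Definition nR' (X : seq T) (R' : {set T}) (X2 : seq T) := if pr X2 == pr X then R' else escR X R' X2.

Lemma step (X : seq T) (R R' : {set T}) : Inv X R R' ->
  (exists R3, reg_succ gv G (X, R) (sigma X R, R3)) ->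
  size (sigma X R) <= k ->
  (m -> forall R2, reg_succ gv G (X, R) (sigma X R, R2) -> R2 \subset R) ->
  (st -> prefix X (sigma X R)) ->
  Inv (sigma X R) (liftS gv G (V :\: letX (sigma X R)) (nR' X R' (sigma X R))) (nR' X R' (sigma X R)) /\
  reg_succ gv G (X, R) (sigma X R, liftS gv G (V :\: letX (sigma X R)) (nR' X R' (sigma X R))).
Proof.
move=> [pX pX' sRR' nw sk] [R3 /reg_rel [p3 sh cd _]] hk hm hs.
set X2 := sigma X R; rewrite -/X2 in p3 sh cd hk hm hs.
have aX2 : all (mem V) X2 by case: p3.
have sR : R \subset V :\: letX X by case: pX.
set W2 := V :\: letX X2.
set W0 := V :\: (letX X :&: letX X2).
have s20 : W2 \subset W0 by apply: setDS; exact: subsetIr.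
have sk' : size (pr X) <= k := leq_trans (size_proj _ _) sk.
have nR0 := nonempty_nw nw sk'.
have finish : forall R'2, is_gvpos gv G' (pr X2) R'2 -> (forall n, ~ winG' n (pr X2) R'2) ->
   (forall w, w \in R'2 -> exists2 v, v \in R & vrel gv G W0 v w) ->
   Inv X2 (liftS gv G W2 R'2) R'2 /\ reg_succ gv G (X, R) (X2, liftS gv G W2 R'2).
  move=> R'2 a b c.
  have sR'2 : R'2 \subset W2 by apply: subset_trans (Wsub X2); case: a.
  have pl : is_gvpos gv G X2 (liftS gv G W2 R'2).
    by apply: liftS_pos => //; apply: good_from_pos sub (Wsub X2) a.
  split; first by split => //; exact: liftS_sup.
  by apply: mk_reg => //; exact: liftS_succ s20 c.
have allowedP : prefix (pr X) (pr X2) || prefix (pr X2) (pr X) ->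
   #|(letX (pr X) :\: letX (pr X2)) :|: (letX (pr X2) :\: letX (pr X))| = 1 ->
   (m -> forall R'', resp gv G' (pr X) R' (pr X2) R'' -> R'' \subset R') ->
   (st -> prefix (pr X) (pr X2)) ->
   pr X2 != pr X ->
   Inv X2 (liftS gv G W2 (nR' X R' X2)) (nR' X R' X2) /\
   reg_succ gv G (X, R) (X2, liftS gv G W2 (nR' X R' X2)).
  move=> psh pcd pm ps ne.
  have al : allowed gv G' k m st (pr X) R' (pr X2).
    split => //.
    - exists set0; split; first by move=> /(gvpos_nspecial pX').
      move=> _; apply: mk_reg => //; first by apply: gvpos0; exact: all_proj.
      by move=> v'; rewrite inE.
    - exact: leq_trans (size_proj _ _) hk.
    - by move=> /ps.
  have [R'2 [r2 nw2]] := escape nw sk' al.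
  have e : nR' X R' X2 = escR X R' X2 by rewrite /nR' (negbTE ne).
  have [r2' nw2'] : resp gv G' (pr X) R' (pr X2) (escR X R' X2) /\
      forall n, ~ winG' n (pr X2) (escR X R' X2).
    exact: (epsilon_spec (inhabits set0)
      (fun R2 => resp gv G' (pr X) R' (pr X2) R2 /\ forall n, ~ winG' n (pr X2) R2)
      (ex_intro _ R'2 (conj r2 nw2))).
  rewrite e; have /reg_rel [pa _ _ rel2] := resp_reg pX' r2'.
  apply: finish => // w /rel2 [v' v'R' r]; exists v'; first exact: subsetP sRR' _ v'R'.
  exact: rel_sub (W0sub X X2) sE r.
case: (shapeP sh cd) => [e|v pXX2 e vV' vD|b pX2X np e bV' bD].
- have ee : nR' X R' X2 = R' by rewrite /nR' e eqxx.
  rewrite ee; apply: finish; rewrite ?e //.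
  move=> w wR'; have wR := subsetP sRR' _ wR'; exists w => //; apply: rel_refl.
  by apply: subsetP (setDS _ (subsetIl _ _)) _ (subsetP sR _ wR).
- have vX : v \notin pr X by rewrite mem_proj; move: vD; rewrite !inE => /andP[/negbTE-> _].
  apply: allowedP.
  + by rewrite e prefix_rcons.
  + by rewrite e card_rcons1.
  + move=> mm R'' /(resp_reg pX') /reg_rel [_ _ _ hrel]; apply/subsetP => w /hrel [v' v'R' r].
    by move: r; rewrite e inter_rcons => r; exact: closed_rel pX' v'R' r.
  + by move=> _; rewrite e prefix_rcons.
  + by rewrite e; apply/eqP => h; move: (congr1 size h); rewrite size_rcons => /eqP; rewrite eqn_leq ltnn.
- have bX2 : b \notin pr X2 by rewrite mem_proj; move: bD; rewrite !inE => /andP[/negbTE-> _].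
  have bW2 : b \in W2 by rewrite !inE (subsetP sVV _ bV') andbT; move: bD; rewrite !inE => /andP[].
  have bX : b \in letX X by move: bD; rewrite !inE => /andP[].
  apply: allowedP.
  + by rewrite e prefix_rcons orbT.
  + by rewrite e card_rcons2.
  + move=> mm R'' /(resp_reg pX') /reg_rel [_ _ _ hrel]; apply/subsetP => w /hrel [v' v'R' r].
    move: (r); rewrite e setIC inter_rcons => r1.
    case: (rel_split b r1) => r2.
      apply: closed_rel pX' v'R' _; rewrite e letX_rcons.
      by move: r2; rewrite setDDl setUC.
    exfalso.
    have pl : is_gvpos gv G X2 (liftS gv G W2 [set b]).
      by apply: liftS_pos => //; [rewrite sub1set|exact: good1].
    have rg : reg_succ gv G (X, R) (X2, liftS gv G W2 [set b]).
      apply: mk_reg => //; apply: liftS_succ s20 _ => w'; rewrite inE => /eqP->.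
      exists v'; first exact: subsetP sRR' _ v'R'.
      apply: rel_sub (W0sub X X2) sE _; rewrite e setIC inter_rcons; exact: r2.
    have bsub : [set b] \subset W2 by rewrite sub1set.
    have bl : b \in liftS gv G W2 [set b] by apply: (subsetP (liftS_sup _ _ bsub)); rewrite inE.
    have := subsetP sR _ (subsetP (hm mm _ rg) b bl).
    by rewrite inE bX.
  + by move=> sst; move: np; rewrite hs.
  + by rewrite e; apply/eqP => h; move: (congr1 size h); rewrite size_rcons => /eqP; rewrite eqn_leq ltnn andbF.
Qed.


Lemma succ_pos p X2 R2 : gv_succ gv G p (X2, R2) -> is_gvpos gv G X2 R2.
Proof.
case=> h1 h2; case: (classic (is_special gv G p.1 p.2)) => sp.
  by case: (h1 sp).
by case: p h1 h2 sp => X R _ h2 sp; case: (h2 sp).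
Qed.

Lemma reg_gv X R p : is_gvpos gv G X R -> reg_succ gv G (X, R) p -> gv_succ gv G (X, R) p.
Proof. by move=> pX r; split => // /(gvpos_nspecial pX). Qed.

Definition ext (s : nat -> pos T) j R2 t : pos T :=
  if t <= j then s t else if t == j.+1 then (sigma (s j).1 (s j).2, R2)
  else (sigma (sigma (s j).1 (s j).2) R2, set0).

Lemma extend s j R2 : consistent_search gv G sigma s (Some j.+1) ->
  gv_succ gv G (s j) (sigma (s j).1 (s j).2, R2) ->
  forall P, strat_has gv G sigma P -> P (ext s j R2) (Some j.+3).
Proof.
move=> [i0 e0 ps cs] g1 P hP; have [strat _ _ _ _] := good.
set X1 := sigma (s j).1 (s j).2.
have p1 : is_gvpos gv G X1 R2 := succ_pos g1.
have [R3 g2] := strat X1 R2 (or_introl p1).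
have g2' : gv_succ gv G (X1, R2) (sigma X1 R2, set0) := resp_empty g2.
apply: hP; last first.
  right; exists j.+2; first by rewrite /inb ltnSn.
  rewrite /ext.
  case: ifP => h1; first by exfalso; move: h1; lia.
  by case: ifP => h2 //; exfalso; move: h2; lia.
split.
- by [].
- by rewrite /ext /=.
- move=> t tt; rewrite /ext; case: leqP => tj; first exact: ps.
  case: eqP => _; first by left.
  by left; exact: succ_pos g2'.
- move=> t tt; rewrite /ext; case: (leqP t.+1 j) => tj.
    by rewrite ltnW //; exact: cs.
  move: tt; rewrite /inb => tt.
  have [->|->] : t = j \/ t = j.+1 by lia.
    by rewrite leqnn eqxx.
  rewrite ltnn eqxx (_ : (j.+2 == j.+1) = false); last by lia.
  by split.
Qed.

Definition nxt (s : seq T * {set T} * {set T}) :=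
  let X2 := sigma s.1.1 s.1.2 in
  ((X2, liftS gv G (V :\: letX X2) (nR' s.1.1 s.2 X2)), nR' s.1.1 s.2 X2).

Lemma core c (s0 : seq T * {set T} * {set T}) : Inv s0.1.1 s0.1.2 s0.2 ->
  (c = 0 /\ s0.1 = ([::], V)) \/
  (c = 1 /\ [/\ is_special gv G [::] V, s0.1.1 = [::] & sigma [::] V = [::]]) -> False.
Proof.
move=> I0 hc; have [strat win_ kb mon sta] := good.
pose stt i := iter i nxt s0.
pose g i : pos T := if i < c then ([::], V) else (stt (i - c)).1.
have gic : forall i, g (i + c) = (stt i).1.
  by move=> i; rewrite /g ltnNge leq_addl /= addnK.
have claim : forall i, Inv (stt i).1.1 (stt i).1.2 (stt i).2 /\
    consistent_search gv G sigma g (Some (i + c).+1).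
  elim=> [|i [Ii [ci0 ce0 cps ccs]]].
    split => //; case: hc => [[ec e]|[ec [sp eX es]]]; subst c.
      split => //.
      - move=> t; rewrite /inb ltnS leqn0 => /eqP ->; rewrite /g /= ?subn0.
        by left; case: I0.
    split => //.
    - move=> t; rewrite /inb => tt; have [->|->] : t = 0 \/ t = 1 by lia.
        by rewrite /g /=; right.
      by rewrite /g /=; left; case: I0.
    - move=> t; rewrite /inb => tt; have -> : t = 0 by lia.
      rewrite /g /=.
      split; last by rewrite eX es.
      split; last by move=> /(_ sp).
      by move=> _; split => //; case: I0.
  set j := i + c.
  have gj : g j = (stt i).1 by rewrite gic.
  have [pX _ sRR' nw sk] := Ii.
  set X := (stt i).1.1; set R := (stt i).1.2.
  have gjXR : g j = (X, R) by rewrite gj -surjective_pairing.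
  have csj : consistent_search gv G sigma g (Some j.+1) by split.
  have [R3 g3] := strat X R (or_introl pX).
  have r3 := resp_reg pX g3.
  have ext_ok : forall R2, reg_succ gv G (X, R) (sigma X R, R2) ->
      forall P, strat_has gv G sigma P -> P (ext g j R2) (Some j.+3).
    move=> R2 r2 P hP; apply: extend => //; rewrite gjXR; exact: reg_gv.
  have ej : forall R2, ext g j R2 j = (X, R) by move=> R2; rewrite /ext leqnn.
  have ej1 : forall R2, ext g j R2 j.+1 = (sigma X R, R2).
    by move=> R2; rewrite /ext ltnn eqxx gjXR.
  have hk : size (sigma X R) <= k.
    have h := ext_ok R3 r3 _ kb j.+1; rewrite ej1 in h; apply: h; rewrite /inb; lia.
  have hm : m -> forall R2, reg_succ gv G (X, R) (sigma X R, R2) -> R2 \subset R.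
    move=> mm R2 r2; have h := ext_ok R2 r2 _ (mon mm) j; rewrite ej ej1 in h.
    apply: h; rewrite /inb; lia.
  have nR : R != set0.
    apply/eqP => e; have := nonempty_nw nw (leq_trans (size_proj _ _) sk).
    by apply/negP; rewrite negbK -subset0 -e.
  have hs : st -> prefix X (sigma X R).
    move=> sst; have h := ext_ok R3 r3 _ (sta sst) j; rewrite ej ej1 in h.
    apply: h => //; rewrite /inb; lia.
  have [Inew rnew] := step Ii (ex_intro _ R3 r3) hk hm hs.
  have sS : stt i.+1 = nxt (stt i) by [].
  have gj1 : g j.+1 = (stt i.+1).1 by rewrite -addSn gic.
  split; first by rewrite sS.
  have pj1 : is_gvpos gv G (g j.+1).1 (g j.+1).2 by rewrite gj1 sS; case: Inew.
  split => //.
  - move=> t; rewrite /inb ltnS leq_eqVlt => /orP[/eqP ->|tt]; first by left.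
    exact: cps.
  - move=> t; rewrite /inb ltnS leq_eqVlt => /orP[/eqP [->]|tt]; last exact: ccs.
    rewrite gjXR gj1 sS; split; last by [].
    exact: reg_gv rnew.
have csN : consistent_search gv G sigma g None.
  have [_ [_ ce0 _ _]] := claim 0.
  split => //.
  - move=> t _; have [_ [_ _ cps _]] := claim t; apply: cps.
    by rewrite /inb ltnS leq_addr.
  - move=> t _; have [_ [_ _ _ ccs]] := claim t.+1; apply: ccs.
    by rewrite /inb ltnS addSn ltnS leq_addr.
have [t _ et] := win_ g None csN (or_introl erefl).
case: (ltnP t c) => tc.
  by move: et; rewrite /g tc /= => e; case: wfG; rewrite e eqxx.
have [[_ _ sRR' nw sk] _] := claim (t - c).
have := nonempty_nw nw (leq_trans (size_proj _ _) sk); apply/negP; rewrite negbK -subset0.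
have gt : g t = (stt (t - c)).1 by rewrite /g ltnNge tc.
by rewrite -et gt; exact: sRR'.
Qed.


Lemma start_special gv0 (H : digraph T) :
  ~ is_gvpos gv0 H [::] (dV H) -> is_special gv0 H [::] (dV H).
Proof.
move=> p0.
have e0 : dV H :\: letX [::] = dV H by apply/setP => z; rewrite !inE.
suff hA : gv0 = Vv \/ gv0 = Vvsc by do 3!(split => //).
case: gv0 p0 => p0; [exfalso|exfalso|by left|by right].
- by apply: p0; split => //; rewrite e0 //; split => // x y _ ->.
- by apply: p0; split => //; rewrite e0 //; split => // u v _ /scc_in [_ ->].
Qed.

Lemma transfer : exists n, winG' n [::] V'.
Proof.
apply: NNPP => hn.
have nw0 : forall n, ~ winG' n [::] V' by move=> n w; apply: hn; exists n.
have [R'1 [p1 nw1]] : exists R'1, is_gvpos gv G' [::] R'1 /\ forall n, ~ winG' n [::] R'1.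
  case: (classic (is_gvpos gv G' [::] V')) => p0; first by exists V'.
  have sp := start_special p0.
  have al : allowed gv G' k m st [::] V' [::].
    split => //.
    - exists set0; split; first by move=> _; split => //; apply: gvpos0.
      by move=> /(_ sp).
    - move=> _ R2 [/(_ sp) [_ [_ sR2 _]] _]; apply: subset_trans sR2 _; exact: subsetDl.
  have [R'1 [r1 nw1]] := escape nw0 (leq0n k) al.
  by exists R'1; split => //; case: r1 => /(_ sp) [_ p].
have sW1 : R'1 \subset V :\: letX [::] by apply: subset_trans (Wsub [::]); case: p1.
have [strat _ _ _ _] := good.
case: (classic (is_gvpos gv G [::] V)) => pG.
  apply: (@core 0 (([::], V), R'1)); last by left.
  split => //; apply: subset_trans sW1 _; exact: subsetDl.
have spG := start_special pG.
have es : sigma [::] V = [::].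
  by have [R h] := strat [::] V (or_intror spG); case: h => /(_ spG) [e _].
apply: (@core 1 (([::], liftS gv G (V :\: letX [::]) R'1), R'1)); last by right.
split => //=.
- apply: liftS_pos => //; exact: good_from_pos sub (Wsub [::]) p1.
- exact: liftS_sup.
Qed.

End Transfer.


Section Final.
Variable T : finType.

Lemma card_nonempty (X Y : seq T) :
  #|(letX X :\: letX Y) :|: (letX Y :\: letX X)| = 1 -> X = [::] -> Y != [::].
Proof.
move=> c eX; apply/eqP => eY; move: c; rewrite eX eY.
have -> : letX (T:=T) [::] = set0 by apply/setP => z; rewrite !inE.
by rewrite setD0 setU0 cards0.
Qed.

Lemma k_pos gv (G : digraph T) k m st sigma : wf_digraph G -> GoodS gv G k m st sigma -> 0 < k.
Proof.
move=> wf good; have [strat _ kb _ _] := good.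
pose s : nat -> pos T := fun _ => ([::], dV G).
have ps0 : is_pos gv G [::] (dV G).
  case: (classic (is_gvpos gv G [::] (dV G))) => p; [by left|right; exact: start_special].
have cs : consistent_search gv G sigma s (Some 1).
  split => //.
have [R3 g3] := strat [::] (dV G) ps0.
have kk := extend good cs g3 kb.
case: (classic (is_gvpos gv G [::] (dV G))) => p.
  have [_ h] := g3; have /reg_rel [_ _ cd _] := h (gvpos_nspecial p).
  have ne := card_nonempty cd erefl.
  have := kk 1 isT; rewrite /ext /=.
  by case: (sigma [::] (dV G)) ne => //= x l _ h1; exact: leq_trans _ h1.
have sp := start_special p.
have [h _] := g3; have [e p3] := h sp.
have [R4 g4] := strat _ _ (or_introl p3).
have [_ h4] := g4; have /reg_rel [_ _ cd _] := h4 (gvpos_nspecial p3).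
have ne := card_nonempty cd e.
have := kk 2 isT; rewrite /ext /=.
rewrite /= in e; rewrite e.
move=> h1; apply: leq_trans h1 => //; rewrite lt0n size_eq0; move: ne; rewrite /= ?e. exact: id.
Qed.

Lemma minnat_spec (P : nat -> Prop) : (exists k, P k) ->
  P (minnat P) /\ forall j, P j -> minnat P <= j.
Proof.
move=> ex; have := ex_min ex => ex'.
exact: (epsilon_spec (inhabits 0) (fun k => P k /\ forall j, P j -> k <= j) ex').
Qed.

Lemma good_exists gv (G : digraph T) m st : wf_digraph G -> exists k sigma, GoodS gv G k m st sigma.
Proof.
move=> wf; have [n w] := gv_exists gv m st wf.
case: n w => [//|n] w; exists #|dV G|, (psigma gv G #|dV G| m st).
apply: posA w => //; rewrite card_gt0; by case: wf.
Qed.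

Lemma good_transfer gv (G G' : digraph T) k m st sigma : wf_digraph G -> wf_digraph G' ->
  subgraph G' G -> GoodS gv G k m st sigma -> exists sigma', GoodS gv G' k m st sigma'.
Proof.
move=> wf wf' sub good; have k0 := k_pos wf good.
have [n w] := transfer wf sub good.
case: n w => [//|n] w; exists (psigma gv G' k m st); exact: posA w.
Qed.

End Final.

Theorem proposition1 (T : finType) (G G' : digraph T) :
  wf_digraph G -> wf_digraph G' -> subgraph G' G ->
  sstat_vsc G' <= sstat_vsc G /\
  (forall (m : bool) (gv : game_variant), lifo m gv G' <= lifo m gv G).
Proof.
move=> wf wf' sub; split.
  set P := fun (H : digraph T) k => exists sigma, [/\ is_strategy Vvsc H sigma,
     strat_has Vvsc H sigma (@winning_search T),
     strat_has Vvsc H sigma (k_search k) &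
     strat_has Vvsc H sigma (@stationary_search T)].
  have toP : forall H k sigma, GoodS Vvsc H k false true sigma -> P H k.
    by move=> H k sigma [a b c _ e]; exists sigma; split => //; exact: e.
  have ofP : forall H k, P H k -> exists sigma, GoodS Vvsc H k false true sigma.
    by move=> H k [sigma [a b c d]]; exists sigma; split.
  have [kk [s0 g0]] := good_exists Vvsc false true wf.
  have [PG _] := minnat_spec (ex_intro _ kk (toP _ _ _ g0)).
  have [sg gG] := ofP _ _ PG.
  have [sg' gG'] := good_transfer wf wf' sub gG.
  have [_ mn] := minnat_spec (ex_intro _ _ (toP _ _ _ gG')).
  exact: mn (toP _ _ _ gG').
move=> m gv.
set P := fun (H : digraph T) k => exists sigma, [/\ is_strategy gv H sigma,
     strat_has gv H sigma (@winning_search T),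
     strat_has gv H sigma (k_search k) &
     (m -> strat_has gv H sigma (@monotone_search T))].
have toP : forall H k sigma, GoodS gv H k m false sigma -> P H k.
  by move=> H k sigma [a b c d _]; exists sigma; split.
have ofP : forall H k, P H k -> exists sigma, GoodS gv H k m false sigma.
  by move=> H k [sigma [a b c d]]; exists sigma; split.
have [kk [s0 g0]] := good_exists gv m false wf.
have [PG _] := minnat_spec (ex_intro _ kk (toP _ _ _ g0)).
have [sg gG] := ofP _ _ PG.
have [sg' gG'] := good_transfer wf wf' sub gG.
have [_ mn] := minnat_spec (ex_intro _ _ (toP _ _ _ gG')).
exact: mn (toP _ _ _ gG').
Qed.
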